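(* Let $n,k$ be positive integers, let $T:M_n(\mathbb{C})\to M_n(\mathbb{C})$ be a UCPT$(n)$-Schur multiplier and $S:M_k(\mathbb{C})\to M_k(\mathbb{C})$ a UCPT$(k)$-Schur multiplier. Then $T\otimes S\in\mathrm{conv}(\mathrm{Aut}(M_n(\mathbb{C})\otimes M_k(\mathbb{C})))$ if and only if $T\in\mathrm{conv}(\mathrm{Aut}(M_n(\mathbb{C})))$ and $S\in\mathrm{conv}(\mathrm{Aut}(M_k(\mathbb{C})))$.
   Context: A UCPT$(n)$-map is a unital completely positive trace-preserving linear map on $M_n(\mathbb{C})$. A UCPT$(n)$-Schur multiplier is a UCPT$(n)$-map of the form $x=(x_{ij})\mapsto (b_{ij}x_{ij})$ for some fixed matrix $(b_{ij})\in M_n(\mathbb{C})$. $\mathrm{Aut}(M_m(\mathbb{C}))$ is the set of maps $x\mapsto u^*xu$ with $u$ unitary, $\mathrm{conv}$ denotes convex hull, and $M_n(\mathbb{C})\otimes M_k(\mathbb{C})$ is identified with $M_{nk}(\mathbb{C})$. *)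

(* Defs.v *)
From HB Require Import structures.
From mathcomp Require Import all_boot all_order all_algebra.
From mathcomp Require Import complex mxtens.
From mathcomp Require Import reals.

Set Implicit Arguments.
Unset Strict Implicit.
Unset Printing Implicit Defensive.

Import Order.TTheory GRing.Theory Num.Theory.
Local Open Scope ring_scope.

Section Defs.
Variable C : numClosedFieldType.

Definition adjmx m n (A : 'M[C]_(m, n)) : 'M[C]_(n, m) :=
  \matrix_(i, j) Num.conj (A j i).

(* positive semidefinite: x^* A x >= 0 for all vectors x
   (in the partial order of C this means real and nonnegative) *)
Definition psd n (A : 'M[C]_n) : Prop :=
  forall x : 'cV[C]_n, 0 <= (adjmx x *m A *m x) 0 0.

(* M_m(M_n) identified with M_(m*n) via mxtens_index (consistent with tensmx):
   block (a,b) of X *)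
Definition blk m n (X : 'M[C]_(m * n)) (a b : 'I_m) : 'M[C]_n :=
  \matrix_(i, j) X (mxtens_index (a, i)) (mxtens_index (b, j)).

(* amplification id_{M_m} (x) Phi acting on M_m(M_n) = M_(m*n) *)
Definition ampl m n (Phi : 'M[C]_n -> 'M[C]_n) (X : 'M[C]_(m * n)) : 'M[C]_(m * n) :=
  \matrix_(r, s) Phi (blk X (mxtens_unindex r).1 (mxtens_unindex s).1)
                     (mxtens_unindex r).2 (mxtens_unindex s).2.

Definition is_linear_map n (Phi : 'M[C]_n -> 'M[C]_n) : Prop :=
  forall (a : C) (x y : 'M[C]_n), Phi (a *: x + y) = a *: Phi x + Phi y.

Definition completely_positive n (Phi : 'M[C]_n -> 'M[C]_n) : Prop :=
  forall (m : nat) (X : 'M[C]_(m * n)), psd X -> psd (ampl Phi X).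

Definition UCPT n (Phi : 'M[C]_n -> 'M[C]_n) : Prop :=
  [/\ is_linear_map Phi,
      Phi 1%:M = 1%:M,
      (forall x, \tr (Phi x) = \tr x) &
      completely_positive Phi].

Definition schur_mult n (b : 'M[C]_n) (x : 'M[C]_n) : 'M[C]_n :=
  \matrix_(i, j) (b i j * x i j).

Definition UCPT_schur n (Phi : 'M[C]_n -> 'M[C]_n) : Prop :=
  UCPT Phi /\ exists b : 'M[C]_n, forall x, Phi x = schur_mult b x.

Definition unitary n (u : 'M[C]_n) : Prop := adjmx u *m u = 1%:M.

Definition in_conv_Aut n (Phi : 'M[C]_n -> 'M[C]_n) : Prop :=
  exists (N : nat) (lam : 'I_N -> C) (u : 'I_N -> 'M[C]_n),
    [/\ forall l, 0 <= lam l,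
        \sum_(l < N) lam l = 1,
        forall l, unitary (u l) &
        forall x, Phi x = \sum_(l < N) lam l *: (adjmx (u l) *m x *m u l)].

(* tensor product T (x) S of linear maps, acting on M_n (x) M_k = M_(n*k):
   the linear extension of x (x) y |-> T x (x) S y *)
Definition tens_map n k (T : 'M[C]_n -> 'M[C]_n) (S : 'M[C]_k -> 'M[C]_k)
  (X : 'M[C]_(n * k)) : 'M[C]_(n * k) :=
  \sum_(i < n) \sum_(j < n) \sum_(p < k) \sum_(q < k)
     X (mxtens_index (i, p)) (mxtens_index (j, q)) *:
       (T (delta_mx i j) *t S (delta_mx p q)).

End Defs.

(* Main.v *)
Require Import Defs.
From HB Require Import structures.
From mathcomp Require Import all_boot all_order all_algebra.
From mathcomp Require Import complex mxtens.
From mathcomp Require Import reals ring.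
Set Implicit Arguments.
Unset Strict Implicit.
Unset Printing Implicit Defensive.
Import Order.TTheory GRing.Theory Num.Theory.
Local Open Scope ring_scope.

Section Aux.
Variable C : numClosedFieldType.

Lemma sum_collapse (V : nmodType) n (j : 'I_n) (F : 'I_n -> V) :
  (forall i, j != i -> F i = 0) -> \sum_(i < n) F i = F j.
Proof.
move=> H; rewrite (bigD1 j) //= big1 ?addr0 // => i ne; apply: H; by rewrite eq_sym.
Qed.

Arguments sum_collapse {V n} j {F}.

Lemma adj_entry n (u x : 'M[C]_n) i j :
  (adjmx u *m x *m u) i j = \sum_s (\sum_r Num.conj (u r i) * x r s) * u s j.
Proof.
rewrite mxE; apply: eq_bigr => s _; rewrite mxE; congr (_ * _).
by apply: eq_bigr => r _; rewrite mxE.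
Qed.

Lemma adj_delta n (u : 'M[C]_n) i j :
  (adjmx u *m delta_mx i j *m u) i j = Num.conj (u i i) * u j j.
Proof.
rewrite adj_entry (sum_collapse j); last first.
  move=> s ne; rewrite (sum_collapse i); last first.
    by move=> r ne'; rewrite mxE (eq_sym r) (negbTE ne') mulr0.
  by rewrite mxE eqxx (eq_sym s) (negbTE ne) mulr0 mul0r.
rewrite (sum_collapse i); last first.
  by move=> r ne'; rewrite mxE (eq_sym r) (negbTE ne') mulr0.
by rewrite !mxE !eqxx mulr1.
Qed.

Lemma diag_entry n (d : 'I_n -> C) r s :
  (diag_mx (\row_i d i)) r s = d s *+ (r == s).
Proof. by rewrite !mxE; case: eqP => [->|]. Qed.

Lemma adj_diag n (d : 'I_n -> C) x i j :
  (adjmx (diag_mx (\row_i d i)) *m x *m diag_mx (\row_i d i)) i j =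
  Num.conj (d i) * x i j * d j.
Proof.
rewrite adj_entry (sum_collapse j); last first.
  by move=> s ne; rewrite diag_entry (eq_sym s) (negbTE ne) mulr0n mulr0.
rewrite (sum_collapse i); last first.
  by move=> r ne; rewrite diag_entry (eq_sym r) (negbTE ne) mulr0n rmorph0 mul0r.
by rewrite !diag_entry !eqxx !mulr1n.
Qed.

Lemma schur_conv n (b : 'M[C]_n) (Phi : 'M[C]_n -> 'M[C]_n) :
  (forall i, b i i = 1) -> (forall x, Phi x = schur_mult b x) ->
  in_conv_Aut Phi <-> exists N (lam : 'I_N -> C) (v : 'I_N -> 'I_n -> C),
   [/\ forall l, 0 <= lam l, \sum_(l < N) lam l = 1,
       forall l i, Num.conj (v l i) * v l i = 1 &
       forall i j, b i j = \sum_(l < N) lam l * (Num.conj (v l i) * v l j)].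
Proof.
move=> bii HPhi; split.
  case=> N [lam [u [H1 H2 H3 H4]]].
  have Hb : forall i j, b i j = \sum_(l < N) lam l * (Num.conj (u l i i) * u l j j).
    move=> i j; have := congr1 (fun M : 'M[C]_n => M i j) (H4 (delta_mx i j)).
    rewrite HPhi /= !mxE !eqxx mulr1 summxE => ->.
    by apply: eq_bigr => l _; rewrite mxE adj_delta.
  have col1 : forall l i, \sum_r Num.conj (u l r i) * u l r i = 1.
    move=> l i; have := congr1 (fun M : 'M[C]_n => M i i) (H3 l).
    rewrite /= !mxE eqxx mulr1n => <-; by apply: eq_bigr => r _; rewrite mxE.
  have le1 : forall l i, Num.conj (u l i i) * u l i i <= 1.
    move=> l i; rewrite -(col1 l i) (bigD1 i) //= lerDl.
    by apply: sumr_ge0 => r _; rewrite mulrC mul_conjC_ge0.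
  have unim : forall l i, lam l != 0 -> Num.conj (u l i i) * u l i i = 1.
    move=> l i nz.
    have : \sum_(l < N) lam l * (1 - Num.conj (u l i i) * u l i i) = 0.
      rewrite (eq_bigr (fun l => lam l - lam l * (Num.conj (u l i i) * u l i i))); last first.
        by move=> l' _; rewrite mulrBr mulr1.
      by rewrite sumrB H2 -Hb bii subrr.
    have H0 : forall l', true -> 0 <= lam l' * (1 - Num.conj (u l' i i) * u l' i i).
      by move=> l' _; rewrite mulr_ge0 ?subr_ge0.
    move/(psumr_eq0P H0) => /(_ l isT) /eqP.
    by rewrite mulf_eq0 (negbTE nz) /= subr_eq0 => /eqP <-.
  exists N, lam, (fun l i => if lam l == 0 then 1 else u l i i); split => //.
    move=> l i; case: ifPn => [_|nz]; [by rewrite conjC1 mulr1 | exact: unim].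
  move=> i j; rewrite Hb; apply: eq_bigr => l _.
  by case: ifPn => [/eqP->|_]; rewrite ?mul0r.
case=> N [lam [v [H1 H2 H3 H4]]].
exists N, lam, (fun l => diag_mx (\row_i v l i)); split => //.
  move=> l; apply/matrixP => i j; rewrite -(mulmx1 (adjmx _)) adj_diag !mxE.
  by case: eqVneq => [->|ne]; rewrite ?mulr1 ?H3 ?mulr0 ?mul0r.
move=> x; apply/matrixP=> i j; rewrite HPhi !mxE summxE H4 mulr_suml.
by apply: eq_bigr => l _; rewrite mxE adj_diag; ring.
Qed.

Lemma tens_schur n k (b : 'M[C]_n) (c : 'M[C]_k) T S :
  (forall x, T x = schur_mult b x) -> (forall x, S x = schur_mult c x) ->
  forall X, tens_map T S X = schur_mult (b *t c) X.
Proof.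
move=> HT HS X.
have -> : tens_map T S X = tens_map (schur_mult b) (schur_mult c) X.
  apply: eq_bigr => i _; apply: eq_bigr => j _; apply: eq_bigr => p _.
  by apply: eq_bigr => q _; rewrite HT HS.
apply/matrixP => r s; case: (mxtens_indexP r) => i p; case: (mxtens_indexP s) => j q.
rewrite [RHS]mxE tensmxE /tens_map summxE (sum_collapse i); last first.
  move=> i' ne; rewrite summxE; apply: big1 => j' _; rewrite summxE.
  apply: big1 => p' _; rewrite summxE; apply: big1 => q' _.
  by rewrite mxE tensmxE !mxE (negbTE ne) ?andbF /= ?(mulr0, mul0r).
rewrite summxE (sum_collapse j); last first.
  move=> j' ne; rewrite summxE; apply: big1 => p' _; rewrite summxE.
  apply: big1 => q' _.
  by rewrite mxE tensmxE !mxE (negbTE ne) ?andbF /= ?(mulr0, mul0r).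
rewrite summxE (sum_collapse p); last first.
  move=> p' ne; rewrite summxE; apply: big1 => q' _.
  by rewrite mxE tensmxE !mxE (negbTE ne) ?andbF /= ?(mulr0, mul0r).
rewrite summxE (sum_collapse q); last first.
  move=> q' ne.
  by rewrite mxE tensmxE !mxE (negbTE ne) ?andbF /= ?(mulr0, mul0r).
rewrite mxE tensmxE !mxE !eqxx /=; ring.
Qed.

End Aux.

Theorem theorem2p2 (R : realType) (n k : nat) (hn : (0 < n)%N) (hk : (0 < k)%N)
  (T : 'M[R[i]]_n -> 'M[R[i]]_n) (S : 'M[R[i]]_k -> 'M[R[i]]_k) :
  UCPT_schur T -> UCPT_schur S ->
  (in_conv_Aut (tens_map T S) <-> (in_conv_Aut T /\ in_conv_Aut S)).
Proof.
case=> [[_ HT1 _ _] [b Hb]] [[_ HS1 _ _] [c Hc]].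
have bii : forall i, b i i = 1.
  move=> i; have := congr1 (fun M : 'M[R[i]]_n => M i i) HT1.
  by rewrite /= Hb !mxE eqxx mulr1n mulr1.
have cii : forall i, c i i = 1.
  move=> i; have := congr1 (fun M : 'M[R[i]]_k => M i i) HS1.
  by rewrite /= Hc !mxE eqxx mulr1n mulr1.
have bcii : forall r, (b *t c) r r = 1.
  by move=> r; case: (mxtens_indexP r) => i p; rewrite tensmxE bii cii mulr1.
rewrite (schur_conv bcii (tens_schur Hb Hc)) (schur_conv bii Hb) (schur_conv cii Hc).
split.
  case=> N [lam [w [H1 H2 H3 H4]]]; split.
    pose p0 : 'I_k := Ordinal hk.
    exists N, lam, (fun l i => w l (mxtens_index (i, p0))); split => // i j.
    by rewrite -H4 tensmxE cii mulr1.
  pose i0 : 'I_n := Ordinal hn.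
  exists N, lam, (fun l p => w l (mxtens_index (i0, p))); split => // p q.
  by rewrite -H4 tensmxE bii mul1r.
case=> [[N1 [lam [v [H1 H2 H3 H4]]]] [N2 [mu [w [G1 G2 G3 G4]]]]].
exists (N1 * N2)%N, (fun r => lam (mxtens_unindex r).1 * mu (mxtens_unindex r).2),
  (fun r s => v (mxtens_unindex r).1 (mxtens_unindex s).1 *
              w (mxtens_unindex r).2 (mxtens_unindex s).2); split.
- by move=> r; rewrite mulr_ge0.
- by rewrite -(mulr_sum lam mu) H2 G2 mulr1.
- by move=> r s; rewrite rmorphM /= mulrACA H3 G3 mulr1.
move=> r s; case: (mxtens_indexP r) => i p; case: (mxtens_indexP s) => j q.
rewrite tensmxE H4 G4 mulr_sum; apply: eq_bigr => l _.
rewrite !mxtens_indexK /= rmorphM /=; ring.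
Qed.
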